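(* Let $K\ge 2$, $M,N,d$ be positive integers with $d\le\min(M,N)$. If the symmetric system $(M\times N,d)^K$ is proper, then $$\frac{dK}{\min(M,N)}\le 1+\frac{\max(M,N)}{\min(M,N)}-\frac{d}{\min(M,N)}.$$
   Context: A $K$-user MIMO interference system $\Pi_{k=1}^K(M^{[k]}\times N^{[k]},d^{[k]})$ is specified by positive integers $M^{[k]}$, $N^{[k]}$ and $d^{[k]}\le\min(M^{[k]},N^{[k]})$, $k\in\mathcal{K}=\{1,\dots,K\}$; the symmetric system $(M\times N,d)^K$ has $M^{[k]}=M$, $N^{[k]}=N$, $d^{[k]}=d$ for all $k$. Its variables are: for each $j\in\mathcal K$ and $n\in\{1,\dots,d^{[j]}\}$ a set $T_{j,n}$ of $M^{[j]}-d^{[j]}$ variables, and for each $k\in\mathcal K$, $m\in\{1,\dots,d^{[k]}\}$ a set $R_{k,m}$ of $N^{[k]}-d^{[k]}$ variables, all pairwise disjoint. The equations are $E^{kj}_{mn}$ for $j,k\in\mathcal K$, $k\ne j$, $m\le d^{[k]}$, $n\le d^{[j]}$, forming the set $\mathcal E$, with $\mathrm{var}(E^{kj}_{mn})=T_{j,n}\cup R_{k,m}$. The system is proper if for every $S\subseteq\mathcal E$, $|S|\le\left|\bigcup_{E\in S}\mathrm{var}(E)\right|$. *)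

(* Defs.v *)
From HB Require Import structures.
From mathcomp Require Import all_boot all_order all_algebra.
Set Implicit Arguments. Unset Strict Implicit. Unset Printing Implicit Defensive.

(* K-user MIMO interference system given by M, N, d : nat -> nat
   (users are indexed 0..K-1). *)

(* Variables: TVar j n t  is the t-th variable of T_{j,n} (t < M j - d j),
              RVar k m r  is the r-th variable of R_{k,m} (r < N k - d k). *)
Inductive mvar := TVar of nat & nat & nat | RVar of nat & nat & nat.

Definition mvar_enc (v : mvar) : bool * (nat * nat * nat) :=
  match v with TVar a b c => (true, (a, b, c)) | RVar a b c => (false, (a, b, c)) end.
Definition mvar_dec (p : bool * (nat * nat * nat)) : mvar :=
  match p with (true, (a, b, c)) => TVar a b c | (false, (a, b, c)) => RVar a b c end.
Lemma mvar_encK : cancel mvar_enc mvar_dec. Proof. by case. Qed.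
HB.instance Definition _ := Equality.copy mvar (can_type mvar_encK).

(* Equation E^{kj}_{mn} encoded as (k, j, m, n), 0-indexed. *)
Definition meqn := (nat * nat * nat * nat)%type.

Definition is_eqn (K : nat) (d : nat -> nat) (e : meqn) : bool :=
  let: (k, j, m, n) := e in
  [&& k < K, j < K, k != j, m < d k & n < d j].

Definition eqn_vars (M N d : nat -> nat) (e : meqn) : seq mvar :=
  let: (k, j, m, n) := e in
  [seq TVar j n t | t <- iota 0 (M j - d j)] ++
  [seq RVar k m r | r <- iota 0 (N k - d k)].

Definition proper (K : nat) (M N d : nat -> nat) : Prop :=
  forall S : seq meqn, uniq S -> all (is_eqn K d) S ->
    size S <= size (undup (flatten [seq eqn_vars M N d e | e <- S])).

Definition proper_sym (K M N d : nat) : Prop :=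
  proper K (fun _ => M) (fun _ => N) (fun _ => d).

(* Main.v *)
Require Import Defs.
From mathcomp Require Import all_boot all_order all_algebra zify.
Import Order.TTheory GRing.Theory Num.Theory.

Definition Tk K d k : seq (nat * nat * nat) :=
  [seq (jm, n) | jm <- [seq (j, m) | j <- [seq j <- iota 0 K | j != k], m <- iota 0 d], n <- iota 0 d].
Definition Sall K d : seq meqn :=
  [seq (k, q.1.1, q.1.2, q.2) | k <- iota 0 K, q <- Tk K d k].

Lemma Tk_uniq K d k : uniq (Tk K d k).
Proof.
apply: allpairs_uniq; last by move=> [? ?] [? ?] _ _ [-> ->].
  apply: allpairs_uniq; last by move=> [? ?] [? ?] _ _ [-> ->].
  by rewrite filter_uniq // iota_uniq.
  by rewrite iota_uniq.
by rewrite iota_uniq.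
Qed.

Lemma Tk_size K d k : k < K -> size (Tk K d k) = (K - 1) * d * d.
Proof.
move=> kK; rewrite !size_allpairs size_iota size_filter.
have := count_predC (pred1 k) (iota 0 K).
rewrite size_iota.
have -> : count (pred1 k) (iota 0 K) = 1.
  by have := count_uniq_mem k (iota_uniq 0 K); rewrite mem_iota /= kK.
have -> : count (predC (pred1 k)) (iota 0 K) = count (fun j => j != k) (iota 0 K).
  by apply: eq_count => j /=.
set c := count _ _ => H. by have -> : c = K - 1 by lia.
Qed.

Lemma Sall_uniq K d : uniq (Sall K d).
Proof.
apply: allpairs_uniq_dep.
- exact: iota_uniq.
- by move=> k _; apply: Tk_uniq.
- move=> [k q] [k' q'] _ _ /=.
  move: q q' => [[j m] n] [[j' m'] n'] /= [-> -> -> ->] //.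
Qed.

Lemma Sall_size K d : size (Sall K d) = K * ((K - 1) * d * d).
Proof.
rewrite size_allpairs_dep.
have -> : [seq size (Tk K d k) | k <- iota 0 K] = nseq K ((K - 1) * d * d).
  have H : all (pred1 ((K - 1) * d * d)) [seq size (Tk K d k) | k <- iota 0 K].
    apply/allP => x /mapP [k]; rewrite mem_iota => /andP[_ h] ->.
    by rewrite /= Tk_size.
  by rewrite {1}(all_pred1P _ _ H) size_map size_iota.
by rewrite sumn_nseq mulnC.
Qed.

Lemma Sall_eqn K d : all (is_eqn K (fun _ => d)) (Sall K d).
Proof.
apply/allP => e /allpairsPdep [k [q [hk hq ->]]].
move: hk; rewrite mem_iota /= => kK.
move: hq => /allpairsP [[[j m] n] [/= /allpairsP [[j0 m0] [/= hj hm [-> ->]]] hn ->]].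
move: hj hm hn; rewrite mem_filter !mem_iota /= => /andP[jk jK] mm nn.
by rewrite /is_eqn kK jK eq_sym jk mm nn.
Qed.

Definition Vall K M N d : seq mvar :=
  [seq TVar p.1 p.2 t | p <- [seq (j, n) | j <- iota 0 K, n <- iota 0 d], t <- iota 0 (M - d)] ++
  [seq RVar p.1 p.2 t | p <- [seq (j, n) | j <- iota 0 K, n <- iota 0 d], t <- iota 0 (N - d)].

Lemma Vall_size K M N d : size (Vall K M N d) = K * d * (M - d) + K * d * (N - d).
Proof. by rewrite size_cat !size_allpairs !size_iota. Qed.

Lemma vars_sub K M N d :
  {subset undup (flatten [seq eqn_vars (fun _ => M) (fun _ => N) (fun _ => d) e | e <- Sall K d])
   <= Vall K M N d}.
Proof.
move=> v; rewrite mem_undup => /flatten_mapP [e he].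
have := allP (Sall_eqn K d) e he.
case: e he => [[[k j] m] n] _ /and5P [kK jK _ mk nj].
rewrite mem_cat => /orP [] /mapP [t ht ->]; rewrite mem_cat; apply/orP.
- left; apply/allpairsP; exists ((j, n), t) => /=; split => //.
  by apply/allpairsP; exists (j, n); rewrite !mem_iota /=.
- right; apply/allpairsP; exists ((k, m), t) => /=; split => //.
  by apply/allpairsP; exists (k, m); rewrite !mem_iota /=.
Qed.

Lemma key K M N d : 2 <= K -> 0 < d -> d <= minn M N -> proper_sym K M N d ->
  d * K + d <= M + N.
Proof.
move=> K2 d0 dmin P.
have := P _ (Sall_uniq K d) (Sall_eqn K d).
move=> h; have := leq_trans h (uniq_leq_size (undup_uniq _) (vars_sub K M N d)).
rewrite Sall_size Vall_size.
move: dmin; rewrite leq_min => /andP[dM dN] h2.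
have h3 : K * d * ((K - 1) * d) <= K * d * ((M - d) + (N - d)).
  by move: h2; clear; nia.
rewrite leq_pmul2l in h3; last by rewrite muln_gt0 d0 andbT; lia.
lia.
Qed.
From mathcomp Require Import ring.
Local Open Scope ring_scope.
Theorem corollary1 (K M N d : nat) :
  (2 <= K)%N -> (0 < M)%N -> (0 < N)%N -> (0 < d)%N -> (d <= minn M N)%N ->
  proper_sym K M N d ->
  (d * K)%:R / (minn M N)%:R <= 1 + (maxn M N)%:R / (minn M N)%:R - d%:R / (minn M N)%:R :> rat.
Proof.
move=> K2 M0 N0 d0 dmin P.
have hk := @key K M N d K2 d0 dmin P.
have m0 : (0 < minn M N)%N by rewrite leq_min M0 N0.
have mR : 0 < (minn M N)%:R :> rat by rewrite ltr0n.
have E : 1 + (maxn M N)%:R / (minn M N)%:R - d%:R / (minn M N)%:R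
   = ((minn M N)%:R + (maxn M N)%:R - d%:R) / (minn M N)%:R :> rat.
  by field; rewrite pnatr_eq0 -lt0n.
rewrite E ler_pM2r ?invr_gt0 // lerBrDr -!natrD ler_nat addn_min_max.
exact: hk.
Qed.
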